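(* For all $\varepsilon>0$ and $A,r\in\mathbb{N}$ there exist $\delta>0$ and $N\in\mathbb{N}$ such that the following holds. Let $n_1,\ldots,n_r$ be positive integers with $n_i\leq An_j$ for all $i,j$ and $n=n_1+\cdots+n_r\geq N$; let $\Lambda=(\lambda_{i,j})$ be a symmetric non-negative $r\times r$ matrix that is connected and $\varepsilon$-separated; let $p_{i,j}=\lambda_{i,j}/\sqrt{n_in_j}$, $P=(p_{i,j})$, $M_{i,j}=p_{i,j}n_j$, and suppose $\rho(M)\geq 1+\varepsilon$. Then for all $i\in[r]$, $\Pr[\mathrm{GW}(\vec n,P,e_i)\text{ goes extinct}]\leq 1-\delta$.
   Context: $\mathrm{GW}(\vec n,P,x)$, for $x\in\mathbb{N}^r$, is the multi-type Galton–Watson process started with $x(i)$ individuals of type $i$, in which each individual of type $i$ independently has, for each $j\in[r]$, an independent $\mathrm{Binomial}(n_j,p_{i,j})$ number of children of type $j$. It goes extinct if its total population is finite. $e_i$ is the $i$-th standard basis vector. $\rho(M)$ is the largest eigenvalue of $M$. $\Lambda$ is $\varepsilon$-separated if for all $i,j$ either $\lambda_{i,j}=0$ or $\varepsilon\leq\lambda_{i,j}\leq 1/\varepsilon$; connected if the graph on $[r]$ with edges $\{i,j\}$ for $\lambda_{i,j}>0$ is connected. *)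

(* Defs.v *)
From HB Require Import structures.
From mathcomp Require Import all_boot all_order all_algebra.
From mathcomp Require Import all_classical all_reals all_analysis.
Set Implicit Arguments. Unset Strict Implicit. Unset Printing Implicit Defensive.
Import Order.TTheory GRing.Theory Num.Theory.
Import numFieldNormedType.Exports.
Local Open Scope ring_scope.

Definition vecN (r : nat) := 'I_r -> nat.

(* Probability mass functions on N^r (with finite support in all uses). *)
Definition massN (R : realType) (r : nat) := vecN r -> R.

Definition dirac_at (R : realType) (r : nat) (x : vecN r) : massN R r :=
  fun y => if [forall j, y j == x j] then 1 else 0.

(* The sum ranges over all u <= y
   componentwise (encoded as finite functions into a large enough ordinal). *)
Definition convN (R : realType) (r : nat) (d1 d2 : massN R r) : massN R r :=
  fun y =>
    \sum_(u : {ffun 'I_r -> 'I_(\max_(j < r) y j)%N.+1} | [forall j, (u j <= y j)%N])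
       d1 (fun j => nat_of_ord (u j)) * d2 (fun j => (y j - u j)%N).

(* Offspring law of one individual of type i: independent Binomial(n_j, p_ij)
   numbers of children of each type j. *)
Definition offspring (R : realType) (r : nat) (n : 'I_r -> nat) (P : 'M[R]_r)
    (i : 'I_r) : massN R r :=
  fun y => \prod_(j < r)
     ('C(n j, y j)%:R * P i j ^+ y j * (1 - P i j) ^+ (n j - y j)%N).

(* Law of the total offspring vector of a population x (x i individuals of
   type i, reproducing independently). *)
Definition children (R : realType) (r : nat) (n : 'I_r -> nat) (P : 'M[R]_r)
    (x : vecN r) : massN R r :=
  foldr (fun i d => iter (x i) (convN (offspring n P i)) d)
        (dirac_at R (fun _ => 0%N)) (enum 'I_r).

(* An a-priori bound on each coordinate of the children vector of x. *)
Definition child_bound (r : nat) (n : 'I_r -> nat) (x : vecN r) : nat :=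
  (\sum_(i < r) x i * \max_(j < r) n j)%N.

(* gw_law n P t x y = Pr[ Z_t = y ] where (Z_t) is GW(n,P,x), the multi-type
   Galton--Watson process started from Z_0 = x (Markov chain, first-step
   decomposition). *)
Fixpoint gw_law (R : realType) (r : nat) (n : 'I_r -> nat) (P : 'M[R]_r)
    (t : nat) : vecN r -> massN R r :=
  match t with
  | 0 => fun x => dirac_at R x
  | t'.+1 => fun x y =>
      \sum_(z : {ffun 'I_r -> 'I_(child_bound n x).+1})
        children n P x (fun j => nat_of_ord (z j))
        * gw_law n P t' (fun j => nat_of_ord (z j)) y
  end.

(* Probability that GW(n,P,x) goes extinct (total population finite, i.e.
   some generation is empty): the limit of Pr[Z_t = 0] as t -> oo. *)
Definition gw_extinction_prob (R : realType) (r : nat) (n : 'I_r -> nat)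
    (P : 'M[R]_r) (x : vecN r) : R :=
  limn (fun t : nat => gw_law n P t x (fun _ => 0%N)).

Definition unit_vecN (r : nat) (i : 'I_r) : vecN r := fun j => nat_of_bool (j == i).

Definition eps_separated (R : realType) (r : nat) (eps : R) (L : 'M[R]_r) : Prop :=
  forall i j, L i j = 0 \/ (eps <= L i j /\ L i j <= eps^-1).

Definition mx_connected (R : realType) (r : nat) (L : 'M[R]_r) : Prop :=
  forall i j : 'I_r, connect (fun a b => 0 < L a b) i j.

Definition Pmx (R : realType) (r : nat) (n : 'I_r -> nat) (L : 'M[R]_r) : 'M[R]_r :=
  \matrix_(i, j) (L i j / Num.sqrt ((n i * n j)%N%:R)).

Definition Mmx (R : realType) (r : nat) (n : 'I_r -> nat) (P : 'M[R]_r) : 'M[R]_r :=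
  \matrix_(i, j) (P i j * (n j)%:R).

(* Main.v *)
Require Import Defs.
From HB Require Import structures.
From mathcomp Require Import all_boot all_order all_algebra.
From mathcomp Require Import all_classical all_reals all_analysis.
From mathcomp Require Import ring lra zify.
Import Order.TTheory GRing.Theory Num.Theory.
Import numFieldNormedType.Exports.
Local Open Scope ring_scope.

Module Aux.
Set Implicit Arguments. Unset Strict Implicit. Unset Printing Implicit Defensive.
Section Gen.
Variable R : realType.
Variable r : nat.
Variable s : 'I_r -> R.

Definition vec K (u : {ffun 'I_r -> 'I_K}) : vecN r := fun j => nat_of_ord (u j).
Definition Gf (y : vecN r) : R := \prod_j s j ^+ y j.
Definition Phi K (d : massN R r) : R :=
  \sum_(u : {ffun 'I_r -> 'I_K}) d (vec u) * Gf (vec u).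
Definition supp (d : massN R r) (b : vecN r) :=
  forall y, d y != 0 -> forall j, (y j <= b j)%N.

Lemma box_change (K1 K2 : nat) (F : vecN r -> R) (Pr : vecN r -> bool) :
  (K1.+1 <= K2)%N -> (forall y, Pr y -> forall j, (y j < K1.+1)%N) ->
  \sum_(u : {ffun 'I_r -> 'I_K1.+1} | Pr (vec u)) F (vec u)
  = \sum_(u : {ffun 'I_r -> 'I_K2} | Pr (vec u)) F (vec u).
Proof.
move=> le12 hP.
pose h := fun u : {ffun 'I_r -> 'I_K1.+1} => [ffun j => widen_ord le12 (u j)].
pose h' := fun v : {ffun 'I_r -> 'I_K2} => [ffun j => (inord (v j) : 'I_K1.+1)].
have E : forall u, vec (h u) = vec u.
  by move=> u; apply: funext => j; rewrite /vec /h ffunE.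
rewrite (reindex_onto h h'); last first.
  move=> v Pv; apply/ffunP => j; rewrite !ffunE; apply: val_inj => /=.
  by rewrite inordK //; apply: hP Pv j.
apply: eq_big => [u|u _]; last by rewrite E.
have -> : h' (h u) == u.
  by apply/eqP/ffunP => j; rewrite !ffunE; apply: val_inj; rewrite /= inordK.
by rewrite E andbT.
Qed.


Lemma conv_box k (v : {ffun 'I_r -> 'I_k.+1}) (a d : massN R r) :
  Defs.convN a d (vec v) = \sum_(u : {ffun 'I_r -> 'I_k.+1} | [forall j, (vec u j <= vec v j)%N])
     a (vec u) * d (fun j => (vec v j - vec u j)%N).
Proof.
rewrite /Defs.convN.
apply: (@box_change (\max_(j < r) vec v j)%N k.+1 (fun u => a u * d (fun j => (vec v j - u j)%N))
          (fun u => [forall j, (u j <= vec v j)%N])).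
  rewrite ltnS; apply/bigmax_leqP => j _; rewrite /vec -ltnS; exact: ltn_ord.
move=> y /forallP hy j; rewrite ltnS; apply: leq_trans (hy j) _.
exact: (leq_bigmax_cond (F := fun j => vec v j) j).
Qed.

Lemma GfD (a b : vecN r) : Gf (fun j => (a j + b j)%N) = Gf a * Gf b.
Proof. by rewrite /Gf -big_split; apply: eq_bigr => j _; rewrite exprD. Qed.

Lemma shift_sum k (u : {ffun 'I_r -> 'I_k.+1}) (F : vecN r -> R) (b2 : vecN r) :
  (forall y, F y != 0 -> forall j, (y j <= b2 j)%N) ->
  (forall j, (u j + b2 j <= k)%N) ->
  \sum_(v : {ffun 'I_r -> 'I_k.+1} | [forall j, (vec u j <= vec v j)%N])
      F (fun j => (vec v j - vec u j)%N)
  = \sum_(w : {ffun 'I_r -> 'I_k.+1}) F (vec w).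
Proof.
move=> hF hub.
pose h := fun w : {ffun 'I_r -> 'I_k.+1} => [ffun j => (inord (u j + w j) : 'I_k.+1)].
pose h' := fun v : {ffun 'I_r -> 'I_k.+1} => [ffun j => (inord (v j - u j) : 'I_k.+1)].
rewrite (reindex_onto h h'); last first.
  move=> v /forallP Pv; apply/ffunP => j; rewrite !ffunE; apply: val_inj => /=.
  have vk : (v j <= k)%N by rewrite -ltnS ltn_ord.
  rewrite (@inordK k (v j - u j)); last by rewrite ltnS (leq_trans (leq_subr _ _)).
  by rewrite subnKC ?inordK ?ltnS //; apply: Pv.
pose c := fun w : {ffun 'I_r -> 'I_k.+1} => [forall j, (u j + w j <= k)%N].
have hv : forall w, c w -> forall j, vec (h w) j = (u j + w j)%N.
  by move=> w /forallP cw j; rewrite /vec /h ffunE inordK // ltnS cw.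
rewrite (eq_bigl c); last first.
  move=> w; apply/idP/idP.
    case/andP=> _ /eqP hw; apply/forallP => j.
    have := congr1 (fun f : {ffun 'I_r -> 'I_k.+1} => val (f j)) hw.
    rewrite /h' /h !ffunE /=.
    case: (leqP (u j + w j) k) => // hgt.
    rewrite (@inordK k (_ - _)); last first.
      by rewrite ltnS (leq_trans (leq_subr _ _)) // -ltnS ltn_ord.
    have -> : val (inord (u j + w j) : 'I_k.+1) = 0%N.
      by rewrite /inord /insubd insubN // -leqNgt.
    move=> w0; move: hgt; rewrite -w0 sub0n addn0 => hgt.
    by move: (ltn_ord (u j)); rewrite ltnS leqNgt hgt.
  move=> cw; apply/andP; split.
    by apply/forallP => j; rewrite hv // leq_addr.
  apply/eqP/ffunP => j; apply: val_inj; rewrite /h' ffunE /= -/(vec (h w) j) hv //.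
  by rewrite addKn inordK.
rewrite [RHS](bigID c) /= [X in _ = _ + X]big1 ?addr0; last first.
  move=> w ncw; apply/eqP; apply: contraNT ncw => /hF Fw.
  by apply/forallP => j; apply: leq_trans (hub j); rewrite leq_add2l Fw.
apply: eq_bigr => w cw; congr F; apply: funext => j.
by rewrite hv // addKn.
Qed.

Lemma Phi_conv k (a d : massN R r) (b1 b2 : vecN r) :
  supp a b1 -> supp d b2 -> (forall j, (b1 j + b2 j <= k)%N) ->
  Phi k.+1 (Defs.convN a d) = Phi k.+1 a * Phi k.+1 d.
Proof.
move=> sa sd hb.
rewrite /Phi.
under eq_bigr => v _ do rewrite conv_box big_distrl /=.
rewrite big_distrl /=.
under eq_bigr => v _ do rewrite big_mkcond /=.
rewrite exchange_big /=; apply: eq_bigr => u _.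
rewrite -big_mkcond /= big_distrr /=.
have [a0|an0] := eqVneq (a (vec u)) 0.
  by rewrite a0 big1 ?big1 // => v _; rewrite ?mul0r ?mulr0 ?a0 ?mul0r.
transitivity (\sum_(v : {ffun 'I_r -> 'I_k.+1} | [forall j, (vec u j <= vec v j)%N])
   a (vec u) * Gf (vec u) * (fun y => d y * Gf y) (fun j => (vec v j - vec u j)%N)).
  apply: eq_bigr => v /forallP uv.
  have -> : Gf (vec v) = Gf (fun j => (vec u j + (vec v j - vec u j))%N).
    by congr Gf; apply: funext => j; rewrite subnKC.
  rewrite GfD /=; rewrite -!mulrA; congr (_ * _); rewrite [RHS]mulrCA; congr (_ * _).
rewrite -big_distrr /= (@shift_sum k u (fun y => d y * Gf y) b2).
- by rewrite big_distrr.
- by move=> y; rewrite mulf_eq0 negb_or => /andP[/sd].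
- move=> j; apply: leq_trans (hb j); rewrite leq_add2r; exact: sa an0 j.
Qed.

Lemma supp_conv (a d : massN R r) b1 b2 :
  supp a b1 -> supp d b2 -> supp (Defs.convN a d) (fun j => (b1 j + b2 j)%N).
Proof.
move=> sa sd y hy j.
have [u /forallP Pu nz] : exists2 u : {ffun 'I_r -> 'I_(\max_(j < r) y j)%N.+1},
    [forall j, (u j <= y j)%N] & a (vec u) * d (fun j => (y j - u j)%N) != 0.
  apply/exists_inP; apply: contraNT hy; rewrite negb_exists_in => /forallP H.
  rewrite /Defs.convN big1 // => u Pu; apply/eqP; have := H u; rewrite Pu /=.
  by rewrite negbK.
move: nz; rewrite mulf_eq0 negb_or => /andP[/sa ha /sd hd].
rewrite -(subnKC (Pu j)); apply: leq_add; [exact: ha | exact: hd].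
Qed.

Lemma supp_dirac0 : supp (dirac_at R (fun _ : 'I_r => 0%N)) (fun _ => 0%N).
Proof.
move=> y; rewrite /dirac_at; case: ifP => [/forallP H _ j|]; last by rewrite eqxx.
by rewrite (eqP (H j)).
Qed.

Lemma supp_off (n : 'I_r -> nat) (P : 'M[R]_r) i : supp (offspring n P i) n.
Proof.
move=> y hy j; rewrite leqNgt; apply/negP => hj; move: hy; rewrite /offspring.
by rewrite (bigD1 j) //= bin_small // mul0r !mul0r eqxx.
Qed.

Lemma Phi_dirac0 k : Phi k.+1 (dirac_at R (fun _ : 'I_r => 0%N)) = 1.
Proof.
rewrite /Phi (bigD1 [ffun _ => ord0]) //= big1 ?addr0.
  rewrite /dirac_at; have -> : [forall j, vec [ffun _ => (ord0 : 'I_k.+1)] j == 0%N].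
    by apply/forallP => j; rewrite /vec ffunE.
  by rewrite mul1r /Gf big1 // => j _; rewrite /vec ffunE expr0.
move=> u hu; rewrite /dirac_at; case: ifP; last by rewrite mul0r.
move/forallP => H; case/eqP: hu; apply/ffunP => j; rewrite ffunE; apply: val_inj.
by have := eqP (H j); rewrite /vec /= => ->.
Qed.

Lemma Phi_off k (n : 'I_r -> nat) (P : 'M[R]_r) i : (forall j, (n j <= k)%N) ->
  Phi k.+1 (offspring n P i) = \prod_j (1 - P i j + P i j * s j) ^+ n j.
Proof.
move=> hn.
pose g := fun (j : 'I_r) (m : 'I_k.+1) =>
  'C(n j, m)%:R * P i j ^+ m * (1 - P i j) ^+ (n j - m)%N * s j ^+ m.
have E : forall j, (1 - P i j + P i j * s j) ^+ n j = \sum_m g j m.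
  move=> j; rewrite exprDn (big_ord_widen k.+1 (fun m : nat => (1 - P i j) ^+ (n j - m) * (P i j * s j) ^+ m *+ 'C(n j, m))) ?ltnS //.
  rewrite big_mkcond /=; apply: eq_bigr => m _; rewrite /g.
  case: ifP => hm; last first.
    by rewrite bin_small ?mul0r ?mul0r ?mul0r // ltnNge -ltnS hm.
  by rewrite exprMn -mulr_natl; ring.
under eq_bigr => j _ do rewrite E.
rewrite bigA_distr_bigA /Phi; apply: eq_bigr => f _.
rewrite /offspring /Gf -big_split; apply: eq_bigr => j _.
by rewrite /g /vec.
Qed.

Lemma iter_conv (n : 'I_r -> nat) (P : 'M[R]_r) i (d : massN R r) b m :
  supp d b ->
  supp (iter m (Defs.convN (offspring n P i)) d) (fun j => (b j + m * n j)%N) /\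
  (forall k, (forall j, (b j + m * n j <= k)%N) ->
    Phi k.+1 (iter m (Defs.convN (offspring n P i)) d)
    = Phi k.+1 (offspring n P i) ^+ m * Phi k.+1 d).
Proof.
move=> sd; elim: m => [|m [IHs IHp]] /=.
  split; first by move=> y hy j; rewrite mul0n addn0; apply: sd.
  by move=> k _; rewrite expr0 mul1r.
split.
  move=> y hy j; have := supp_conv (@supp_off n P i) IHs hy j.
  by rewrite mulSn addnCA.
move=> k hk.
rewrite (@Phi_conv k _ _ n (fun j => (b j + m * n j)%N) (@supp_off n P i) IHs).
  rewrite IHp ?exprS ?mulrA // => j; apply: leq_trans (hk j).
  by rewrite leq_add2l mulSn leq_addl.
by move=> j; rewrite addnCA -mulSn; apply: hk.
Qed.

Lemma fold_ch (n : 'I_r -> nat) (P : 'M[R]_r) (x : vecN r) (l : seq 'I_r) :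
  let D := foldr (fun i d => iter (x i) (Defs.convN (offspring n P i)) d)
             (dirac_at R (fun _ => 0%N)) l in
  supp D (fun j => \sum_(i <- l) x i * n j)%N /\
  (forall k, (forall j, (\sum_(i <- l) x i * n j <= k)%N) ->
    Phi k.+1 D = \prod_(i <- l) Phi k.+1 (offspring n P i) ^+ x i).
Proof.
elim: l => [|i l [IHs IHp]] /=.
  split; first by move=> y hy j; rewrite big_nil; apply: supp_dirac0 hy j.
  by move=> k _; rewrite big_nil Phi_dirac0.
have [hs hp] := iter_conv n P i (x i) IHs.
split.
  by move=> y hy j; rewrite big_cons addnC; apply: hs.
move=> k hk; rewrite big_cons hp ?IHp //.
  by move=> j; apply: leq_trans (hk j); rewrite big_cons leq_addl.
by move=> j; have := hk j; rewrite big_cons addnC.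
Qed.

Lemma Phi_children (n : 'I_r -> nat) (P : 'M[R]_r) (x : vecN r) k :
  (forall j, (\sum_i x i * n j <= k)%N) ->
  (forall i, (0 < x i)%N -> 0 <= Phi k.+1 (offspring n P i) <= s i) ->
  supp (children n P x) (fun j => \sum_i x i * n j)%N /\
  Phi k.+1 (children n P x) <= Gf x.
Proof.
move=> hk hg.
have [hs hp] := fold_ch n P x (enum 'I_r).
have E : forall j, (\sum_(i <- enum 'I_r) x i * n j = \sum_i x i * n j)%N.
  by move=> j; rewrite big_enum.
split.
  by move=> y hy j; rewrite -E; apply: hs.
rewrite /children hp; last by move=> j; rewrite E.
rewrite big_enum /Gf; apply: ler_prod => i _.
case: (posnP (x i)) => [->|xp]; first by rewrite !expr0 lexx ler01.
have /andP[h0 h1] := hg i xp.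
rewrite exprn_ge0 //=; apply: lerXn2r => //; rewrite qualifE //=.
exact: le_trans h1.
Qed.

Lemma conv_ge0 (a d : massN R r) : (forall y, 0 <= a y) -> (forall y, 0 <= d y) ->
  forall y, 0 <= Defs.convN a d y.
Proof. by move=> ha hd y; apply: sumr_ge0 => u _; apply: mulr_ge0. Qed.

Lemma off_ge0 (n : 'I_r -> nat) (P : 'M[R]_r) i :
  (forall j, 0 <= P i j <= 1) -> forall y, 0 <= offspring n P i y.
Proof.
move=> hP y; apply: prodr_ge0 => j _; have /andP[h0 h1] := hP j.
by rewrite !mulr_ge0 ?exprn_ge0 ?subr_ge0.
Qed.

Lemma children_ge0 (n : 'I_r -> nat) (P : 'M[R]_r) (x : vecN r) :
  (forall i j, 0 <= P i j <= 1) -> forall y, 0 <= children n P x y.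
Proof.
move=> hP; rewrite /children; elim: (enum 'I_r) => [|i l IH] /=.
  by move=> y; rewrite /dirac_at; case: ifP.
elim: (x i) => [|m IHm] //= y.
by apply: conv_ge0 => // z; apply: off_ge0.
Qed.

Lemma gw_le (n : 'I_r -> nat) (P : 'M[R]_r) :
  (forall i j, 0 <= P i j <= 1) -> (forall i, 0 <= s i) ->
  (forall i, \prod_j (1 - P i j + P i j * s j) ^+ n j <= s i) ->
  forall t x, gw_law n P t x (fun _ => 0%N) <= Gf x.
Proof.
move=> hP hs hg; elim=> [|t IH] x /=.
  rewrite /dirac_at; case: ifP => [/forallP H|_]; last by apply: prodr_ge0 => i _; apply: exprn_ge0.
  by rewrite /Gf big1 // => i _; rewrite -(eqP (H i)) expr0.
have hb : forall j, (\sum_i x i * n j <= child_bound n x)%N.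
  move=> j; rewrite /child_bound; apply: leq_sum => i _; rewrite leq_mul2l.
  by rewrite (leq_bigmax_cond (F := n) j) ?orbT.
have hc := @Phi_children n P x (child_bound n x) hb.
have hle : \sum_(z : {ffun 'I_r -> 'I_(child_bound n x).+1})
    children n P x (fun j => nat_of_ord (z j)) * gw_law n P t (fun j => nat_of_ord (z j)) (fun _ => 0%N)
  <= Phi (child_bound n x).+1 (children n P x).
  apply: ler_sum => z _; apply: ler_wpM2l; first exact: children_ge0.
  exact: IH.
apply: le_trans hle _; apply: (proj2 (hc _)) => i xi.
rewrite Phi_off; last first.
  move=> j; apply: leq_trans (hb j); rewrite (bigD1 i) //=.
  by apply: leq_trans (leq_addr _ _); rewrite leq_pmull.
rewrite hg andbT; apply: prodr_ge0 => j _; apply: exprn_ge0.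
have /andP[h0 h1] := hP i j.
by rewrite addr_ge0 ?subr_ge0 // mulr_ge0.
Qed.
End Gen.

Section Lin.
Variable R : realType.
Variable r : nat.
Variable M : 'I_r -> 'I_r -> R.
Hypothesis hM : forall i j, 0 <= M i j.

Definition step (u : 'I_r -> R) : 'I_r -> R := fun i => u i + \sum_j M i j * u j.
Definition uk k (w : 'I_r -> R) := iter k step w.

Lemma Mu_ge0 (u : 'I_r -> R) i : (forall j, 0 <= u j) -> 0 <= \sum_j M i j * u j.
Proof. by move=> hu; apply: sumr_ge0 => j _; apply: mulr_ge0. Qed.

Lemma uk_ge0 k w : (forall j, 0 <= w j) -> forall j, 0 <= uk k w j.
Proof.
move=> hw; elim: k => [|k IH] //= j.
by rewrite /step addr_ge0 // Mu_ge0.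
Qed.

Lemma uk_mono k w : (forall j, 0 <= w j) -> forall j, w j <= uk k w j.
Proof.
move=> hw; elim: k => [|k IH] j //=.
by apply: le_trans (IH j) _; rewrite /step lerDl Mu_ge0 // => l; apply: uk_ge0.
Qed.

Lemma uk_super mu k w : (forall j, 0 <= w j) ->
  (forall i, mu * w i <= \sum_j M i j * w j) ->
  forall i, mu * uk k w i <= \sum_j M i j * uk k w j.
Proof.
move=> hw hs; elim: k => [|k IH] //= i.
rewrite /step mulrDr.
under eq_bigr => j _ do rewrite mulrDr.
rewrite big_split /= lerD ?IH //.
rewrite mulr_sumr; apply: ler_sum => j _.
by rewrite mulrCA; apply: ler_wpM2l => //; apply: IH.
Qed.

Lemma uk_ub c0 B k w : (forall j, 0 <= w j) -> (forall i j, M i j <= c0) ->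
  (forall j, w j <= B) ->
  forall i, uk k w i <= (1 + r%:R * c0) ^+ k * B.
Proof.
move=> hw hc hB; elim: k => [|k IH] i /=; first by rewrite expr0 mul1r.
rewrite /step exprS -mulrA mulrDl mul1r lerD ?IH //.
have -> : r%:R * c0 * ((1 + r%:R * c0) ^+ k * B) = \sum_(j < r) c0 * ((1 + r%:R * c0) ^+ k * B).
  by rewrite sumr_const card_ord; ring.
apply: ler_sum => j _; apply: ler_pM => //; first exact: uk_ge0.
Qed.

Lemma uk_path (L : 'I_r -> 'I_r -> R) c g w :
  (forall j, 0 <= w j) -> (forall a b, 0 < L a b -> c <= M a b) ->
  0 <= g -> g <= 1 -> g <= c ->
  forall p x k, path (fun a b => 0 < L a b) x p -> (size p <= k)%N ->
  g ^+ size p * w (last x p) <= uk k w x.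
Proof.
move=> hw hL g0 g1 gc; elim=> [|y p IH] x k /=.
  by move=> _ _; rewrite expr0 mul1r uk_mono.
case/andP=> exy pth; case: k => // k; rewrite ltnS => hk /=.
have := IH y k pth hk => {}IH.
rewrite /step; apply: (@le_trans _ _ (\sum_j M x j * uk k w j)); last first.
  by rewrite lerDr; apply: uk_ge0.
rewrite (bigD1 y) //=; apply: (@le_trans _ _ (M x y * uk k w y)); last first.
  by rewrite lerDl; apply: sumr_ge0 => j _; apply: mulr_ge0 => //; apply: uk_ge0.
rewrite exprS -mulrA; apply: ler_pM => //.
- by rewrite mulr_ge0 ?exprn_ge0.
- exact: le_trans gc (hL _ _ exy).
Qed.
End Lin.

Lemma le_sqrtE (R : realType) (x y : R) : 0 <= x -> x ^+ 2 <= y -> x <= Num.sqrt y.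
Proof.
move=> x0 xy; rewrite -(ger0_norm x0) -sqrtr_sqr ler_sqrt //.
exact: le_trans (exprn_ge0 2 x0) xy.
Qed.

Lemma sqrt_leE (R : realType) (x y : R) : 0 <= x -> y <= x ^+ 2 -> Num.sqrt y <= x.
Proof.
move=> x0 xy; rewrite -(ger0_norm x0) -sqrtr_sqr ler_sqrt //.
exact: exprn_ge0.
Qed.

Lemma expR_inv_bound (R : realType) (y : R) : 0 <= y -> expR (- y) <= (1 + y)^-1.
Proof.
move=> y0; rewrite expRN lef_pV2 ?posrE ?expR_gt0 //; last by rewrite ltr_pwDl.
exact: expR_ge1Dx.
Qed.

End Aux.
Import Aux.

Theorem lemma3p1 (R : realType) (eps : R) (A r : nat) :
  0 < eps ->
  exists (delta : R) (N : nat), 0 < delta /\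
  forall (n : 'I_r -> nat) (L : 'M[R]_r),
    (forall i, (0 < n i)%N) ->
    (forall i j, (n i <= A * n j)%N) ->
    (N <= \sum_(i < r) n i)%N ->
    L^T = L ->
    (forall i j, 0 <= L i j) ->
    mx_connected L ->
    eps_separated eps L ->
    (exists mu : R, eigenvalue (Mmx n (Pmx n L)) mu /\ 1 + eps <= mu) ->
    forall i : 'I_r,
      gw_extinction_prob n (Pmx n L) (unit_vecN i) <= 1 - delta.
Proof.
move=> eps0.
pose Aq : R := (A.+1)%:R.
have Aq0 : 0 < Aq by rewrite ltr0n.
pose th := eps / (1 + eps).
pose g := eps / (Aq + eps).
pose D := 1 + r%:R * (Aq / eps).
pose delta := th * g ^+ r / D ^+ r.
pose K := Num.Def.archi_bound (eps^-1).
have hK : eps^-1 < K%:R by apply: archi_boundP; rewrite invr_ge0 ltW.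
have th0 : 0 < th by rewrite divr_gt0 // addr_gt0.
have th1 : th < 1 by rewrite ltr_pdivrMr ?addr_gt0 // mul1r ltrDr.
have g0 : 0 < g by rewrite divr_gt0 // addr_gt0.
have g1 : g <= 1 by rewrite ler_pdivrMr ?addr_gt0 // mul1r lerDr ltW.
have D1 : 1 <= D by rewrite lerDl mulr_ge0 ?divr_ge0 // ltW.
have D0 : 0 < D by apply: lt_le_trans D1.
have Dr0 : 0 < D ^+ r by rewrite exprn_gt0.
have dpos : 0 < delta by rewrite divr_gt0 // mulr_gt0 // exprn_gt0.
have dle1 : delta <= 1.
  rewrite ler_pdivrMr // mul1r; apply: le_trans (exprn_ege1 r D1).
  rewrite -[1]mul1r; apply: ler_pM; [exact: ltW | exact: exprn_ge0 (ltW g0) | exact: ltW | exact: exprn_ile1 (ltW g0) g1].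
exists delta, (r * A * K)%N; split => //.
move=> n L npos nA nN Lsym L0 Lconn Lsep [mu [/eigenvalueP [v vM v0] mu_ge]] i.
have r0 : (0 < r)%N by apply: leq_ltn_trans (leq0n i) (ltn_ord i).
have A1 : (0 < A)%N.
  rewrite lt0n; apply/eqP => A0; move: (nA i i) (npos i); rewrite A0 mul0n.
  by rewrite leqn0 => /eqP ->.
have nK : forall j, (K <= n j)%N.
  move=> j; have h1 : (\sum_(l < r) n l <= \sum_(l < r) A * n j)%N.
    by apply: leq_sum => l _; apply: nA.
  rewrite sum_nat_const card_ord in h1.
  have := leq_trans nN h1; rewrite mulnA leq_pmul2l //.
  by rewrite muln_gt0 r0 A1.
pose q := fun a b => Num.sqrt ((n a * n b)%N%:R : R).
have nR : forall a, 0 < (n a)%:R :> R by move=> a; rewrite ltr0n.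
have qpos : forall a b, 0 < q a b by move=> a b; rewrite sqrtr_gt0 ltr0n muln_gt0 !npos.
have qsym : forall a b, q a b = q b a by move=> a b; rewrite /q mulnC.
have qK : forall a b, K%:R <= q a b.
  move=> a b; apply: le_sqrtE; rewrite ?ler0n // -natrX ler_nat.
  by rewrite expnS expn1 leq_mul.
have qUp : forall a b, (n b)%:R <= A%:R * q a b.
  move=> a b; have -> : A%:R * q a b = Num.sqrt ((A * A * (n a * n b))%N%:R).
    by rewrite natrM sqrtrM ?ler0n // natrM -expr2 sqrtr_sqr ger0_norm ?ler0n.
  apply: le_sqrtE; rewrite ?ler0n // -natrX ler_nat expnS expn1.
  rewrite mulnA [(A * A * n a)%N]mulnAC -mulnA; apply: leq_mul => //.
have qLo : forall a b, q a b <= A%:R * (n b)%:R.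
  move=> a b; apply: sqrt_leE; rewrite ?mulr_ge0 ?ler0n // -natrM -natrX ler_nat.
  rewrite expnS expn1; apply: leq_mul => //; by rewrite leq_pmull.
have Ls : forall a b, L b a = L a b by move=> a b; rewrite -[in RHS]Lsym mxE.
have Lle : forall a b, L a b <= eps^-1.
  by move=> a b; case: (Lsep a b) => [->|[]//]; rewrite invr_ge0 ltW.
pose P := Pmx n L.
have PE : forall a b, P a b = L a b / q a b by move=> a b; rewrite mxE.
have hP : forall a b, 0 <= P a b <= 1.
  move=> a b; rewrite PE divr_ge0 ?L0 ?(ltW (qpos a b)) //= ler_pdivrMr // mul1r.
  by apply: le_trans (Lle a b) _; apply: le_trans (ltW hK) (qK a b).
pose Mm := fun a b => Mmx n P a b.
have ME : forall a b, Mm a b = P a b * (n b)%:R by move=> a b; rewrite /Mm mxE.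
have hM0 : forall a b, 0 <= Mm a b.
  by move=> a b; rewrite ME mulr_ge0 ?ler0n //; case/andP: (hP a b).
have hMup : forall a b, Mm a b <= Aq / eps.
  move=> a b; rewrite ME PE -mulrA.
  have h1 : (n b)%:R / q a b <= Aq.
    rewrite ler_pdivrMr //; apply: le_trans (qUp a b) _.
    by rewrite ler_wpM2r ?(ltW (qpos a b)) // /Aq ler_nat.
  rewrite [_ / eps]mulrC; apply: ler_pM; [exact: L0 | by rewrite mulr_ge0 ?ler0n ?invr_ge0 ?(ltW (qpos a b)) | exact: Lle | by rewrite mulrC].
have hMlo : forall a b, 0 < L a b -> eps / Aq <= Mm a b.
  move=> a b Lp; rewrite ME PE -mulrA.
  have Le : eps <= L a b by case: (Lsep a b) => [L0'|[]//]; rewrite L0' ltxx in Lp.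
  have h1 : Aq^-1 <= (n b)%:R / q a b.
    rewrite ler_pdivlMr // mulrC ler_pdivrMr //; apply: le_trans (qLo a b) _.
    by rewrite [_ * Aq]mulrC ler_wpM2r ?ler0n // /Aq ler_nat.
  apply: ler_pM; [exact: ltW | by rewrite invr_ge0 ltW | exact: Le | by rewrite mulrC].
have hv : forall b, \sum_a v 0 a * Mm a b = mu * v 0 b.
  move=> b; have := congr1 (fun m : 'rV_r => m 0 b) vM; rewrite /= !mxE => <-.
  by apply: eq_bigr => a _.
pose y := fun a => v 0 a / (n a)%:R.
have hy : forall a, \sum_b Mm a b * y b = mu * y a.
  move=> a; rewrite /y mulrA -hv mulr_suml; apply: eq_bigr => b _.
  rewrite !ME !PE Ls qsym; have := nR a; have := nR b; have := qpos a b.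
  move=> h1 h2 h3; field.
  by rewrite !lt0r_neq0.
pose w := fun a => `|y a|.
have hw0 : forall a, 0 <= w a by move=> a; exact: normr_ge0.
have mu0 : 0 < mu by apply: lt_le_trans mu_ge; rewrite addr_gt0.
have hws : forall a, mu * w a <= \sum_b Mm a b * w b.
  move=> a; rewrite /w -[mu]ger0_norm ?(ltW mu0) // -normrM -hy.
  apply: le_trans (ler_norm_sum _ _ _) _; apply: ler_sum => b _.
  by rewrite normrM ger0_norm.
have [j0 hj0] : exists j, v 0 j != 0.
  case/boolP: [exists j, v 0 j != 0] => [/existsP//|/existsPn H].
  case/eqP: v0; apply/rowP => j; rewrite mxE; apply/eqP.
  by have := H j; rewrite negbK.
have wj0 : 0 < w j0 by rewrite normr_gt0 mulf_neq0 // invr_neq0 // lt0r_neq0.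
case: (@arg_maxP _ _ _ i predT w isT) => js _ hjs.
have hmax : forall j, w j <= w js by move=> j; apply: hjs.
have wm0 : 0 < w js by apply: lt_le_trans (hmax j0).
pose U := uk Mm r w.
have U0 : forall a, 0 <= U a by apply: uk_ge0.
have Uup : forall a, U a <= D ^+ r * w js.
  by move=> a; apply: uk_ub.
have Usup : forall a, mu * U a <= \sum_b Mm a b * U b.
  by move=> a; apply: uk_super.
have Ulo : g ^+ r * w js <= U i.
  have := Lconn i js; case/connectP => pp pth lst.
  move: lst; case: (shortenP pth) => p2 pth2 uq _ hl2.
  have sz : (size p2 <= r)%N.
    have := max_card (mem (i :: p2)); rewrite (card_uniqP uq) card_ord /=.
    by move=> h; apply: ltnW.
  have gc : g <= eps / Aq.
    by rewrite ler_pM2l // lef_pV2 ?posrE ?addr_gt0 // lerDl ltW.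
  have := uk_path hM0 hw0 hMlo (ltW g0) g1 gc pth2 sz.
  rewrite -hl2; apply: le_trans; rewrite ler_wpM2r ?(ltW wm0) //.
  by apply: ler_wiXn2l => //; apply: ltW.
pose kap := th / (D ^+ r * w js).
have kap0 : 0 < kap by rewrite divr_gt0 // mulr_gt0.
pose x := fun a => kap * U a.
have x0 : forall a, 0 <= x a by move=> a; rewrite mulr_ge0 ?(ltW kap0).
have xth : forall a, x a <= th.
  move=> a; rewrite /x /kap mulrAC ler_pdivrMr ?mulr_gt0 // ler_pM2l //.
pose sv := fun a => 1 - x a.
have sv0 : forall a, 0 <= sv a.
  by move=> a; rewrite subr_ge0; apply: le_trans (xth a) (ltW th1).
have svi : sv i <= 1 - delta.
  rewrite /sv lerD2l lerN2.
  have -> : delta = kap * (g ^+ r * w js).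
    rewrite /delta /kap; field.
    by rewrite !lt0r_neq0.
  by rewrite /x ler_pM2l.
have hg : forall a, \prod_j (1 - P a j + P a j * sv j) ^+ n j <= sv a.
  move=> a.
  have e1 : forall b, 1 - P a b + P a b * sv b = 1 + - (P a b * x b).
    by move=> b; rewrite /sv; ring.
  under eq_bigr => b _ do rewrite e1.
  apply: (@le_trans _ _ (\prod_b expR (- (P a b * x b)) ^+ n b)).
    apply: ler_prod => b _; have /andP[p0 p1] := hP a b.
    have px : P a b * x b <= 1.
      rewrite -[1]mulr1; apply: ler_pM => //.
      by apply: le_trans (xth b) (ltW th1).
    rewrite exprn_ge0 ?subr_ge0 //=; apply: lerXn2r; rewrite ?qualifE /= ?subr_ge0 ?expR_ge0 //.
    exact: expR_ge1Dx.
  under eq_bigr => b _ do rewrite -expRM_natl.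
  rewrite -expR_sum.
  have e2 : \sum_b (n b)%:R * - (P a b * x b) = - (kap * \sum_b Mm a b * U b).
    rewrite mulr_sumr -sumrN; apply: eq_bigr => b _; rewrite ME /x; ring.
  rewrite e2; apply: (@le_trans _ _ (expR (- (mu * x a)))).
    rewrite ler_expR lerN2 /x mulrCA ler_pM2l //.
  apply: le_trans (expR_inv_bound _) _; first by rewrite mulr_ge0 ?(ltW mu0).
  have hpos : 0 < 1 + mu * x a by rewrite ltr_pwDl // mulr_ge0 // ltW.
  rewrite -[X in X <= _]div1r ler_pdivrMr //.
  have h1 : x a * (1 + eps) <= eps.
    by have := xth a; rewrite /th ler_pdivlMr // addr_gt0.
  have xa0 := x0 a.
  have h2 : 1 <= mu * (1 - x a) by rewrite /sv; nra.
  rewrite /sv; nra.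
have Ge : Gf sv (unit_vecN i) = sv i.
  rewrite /Gf (bigD1 i) //= big1 ?mulr1.
    by rewrite /unit_vecN eqxx expr1.
  by move=> j /negbTE ji; rewrite /unit_vecN ji expr0.
have hb : forall t, gw_law n P t (unit_vecN i) (fun _ => 0%N) <= 1 - delta.
  move=> t; apply: le_trans svi; rewrite -Ge.
  exact: (gw_le hP sv0 hg).
rewrite /gw_extinction_prob -/P.
case: (pselect (cvgn (fun t => gw_law n P t (unit_vecN i) (fun _ => 0%N)))) => hc.
  apply: limr_le => //; near=> t; exact: hb.
by rewrite (dvgP hc) subr_ge0.
Unshelve. all: by end_near.
Qed.
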